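(* In $\mathcal F_8$, the hyperelliptic divisor $H_h$ and the unigonal divisor $H_u$ have nonempty intersection, and $H_u$ has no self-intersection in the sense of Looijenga, i.e. $H_u^{(2)}=\emptyset$.
   Context: $\Lambda_8=U^2\oplus E_8\oplus E_7\oplus A_1$ (negative definite root lattices), signature $(2,18)$; $\mathcal D_{\Lambda_8}=\{[z]\in\mathbb P(\Lambda_8\otimes\mathbb C):z^2=0,z\bar z>0\}$, $\mathcal D_v=\{[z]\in\mathcal D_{\Lambda_8}:z\cdot v=0\}$, $\Gamma=O(\Lambda_8)$, $\mathcal F_8=\Gamma\backslash\mathcal D_{\Lambda_8}$. For primitive $v\in\Lambda_8$, $\operatorname{div}(v)$ is the positive generator of $\langle v,\Lambda_8\rangle$; $v$ is unigonal if $v^2=-2,\operatorname{div}(v)=2$, hyperelliptic if $v^2=-6,\operatorname{div}(v)=2$. $H_u$ (resp. $H_h$) is the image in $\mathcal F_8$ of $\bigcup\mathcal D_v$ over unigonal (resp. hyperelliptic) $v$. For $m\ge1$, the Looijenga self-intersection $H_u^{(m)}$ is the image in $\mathcal F_8$ of $\bigcup\mathcal D_{v_1}\cap\cdots\cap\mathcal D_{v_m}$ over all $m$-tuples of linearly independent vectors $v_1,\dots,v_m$ in the $\Gamma$-orbit of a unigonal vector. *)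

(* Defs.v *)
(* lattices as integer row vectors, complex numbers as
   R[i] (mathcomp-real-closed) over an arbitrary R : realType. *)
From HB Require Import structures.
From mathcomp Require Import all_boot all_order all_algebra.
From mathcomp Require Import complex.
From mathcomp Require Import reals.
Set Implicit Arguments. Unset Strict Implicit. Unset Printing Implicit Defensive.
Import Order.TTheory GRing.Theory Num.Theory.
Local Open Scope ring_scope.

Definition graph_mx (n : nat) (d : int) (edges : seq (nat * nat)) : 'M[int]_n :=
  \matrix_(i < n, j < n)
    if i == j then d
    else if ((nat_of_ord i, nat_of_ord j) \in edges)
            || ((nat_of_ord j, nat_of_ord i) \in edges) then 1 else 0.

Definition U_mx : 'M[int]_2 := graph_mx 2 0 [:: (0, 1)]%N.

(* negative definite root lattices = minus the Cartan matrices
   (Bourbaki numbering 1..n shifted to 0..n-1):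
   E8: 1-3,3-4,4-5,5-6,6-7,7-8,2-4 ; E7: 1-3,3-4,4-5,5-6,6-7,2-4 ; A1 *)
Definition E8_mx : 'M[int]_8 :=
  graph_mx 8 (-2) [:: (0,2); (2,3); (3,4); (4,5); (5,6); (6,7); (1,3)]%N.
Definition E7_mx : 'M[int]_7 :=
  graph_mx 7 (-2) [:: (0,2); (2,3); (3,4); (4,5); (5,6); (1,3)]%N.
Definition A1_mx : 'M[int]_1 := graph_mx 1 (-2) [::].

Definition dsum m n (A : 'M[int]_m) (B : 'M[int]_n) : 'M[int]_(m + n) :=
  block_mx A 0 0 B.

Definition Gram8 : 'M[int]_20 :=
  dsum U_mx (dsum U_mx (dsum E8_mx (dsum E7_mx A1_mx))).

Definition bil (v w : 'rV[int]_20) : int := (v *m Gram8 *m w^T) 0 0.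

Definition primitive (v : 'rV[int]_20) : Prop :=
  v != 0 /\ forall (k : int) (w : 'rV[int]_20), v = k *: w -> k = 1 \/ k = -1.

(* d is the positive generator of the ideal <v, Lambda_8> = { bil v w } *)
Definition is_div (v : 'rV[int]_20) (d : int) : Prop :=
  0 < d /\ (forall w, (d %| bil v w)%Z) /\ (exists w, bil v w = d).

Definition unigonal (v : 'rV[int]_20) : Prop :=
  primitive v /\ bil v v = -2 /\ is_div v 2.

Definition hyperelliptic (v : 'rV[int]_20) : Prop :=
  primitive v /\ bil v v = -6 /\ is_div v 2.

(* Gamma = O(Lambda_8): integral invertible matrices preserving the form,
   acting on row vectors by v |-> v *m g *)
Definition in_Gamma (g : 'M[int]_20) : Prop :=
  g \in unitmx /\ g *m Gram8 *m g^T = Gram8.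

Definition in_unigonal_orbit (v : 'rV[int]_20) : Prop :=
  exists (u : 'rV[int]_20) (g : 'M[int]_20), unigonal u /\ in_Gamma g /\ v = u *m g.

Definition lin_indep2 (v1 v2 : 'rV[int]_20) : Prop :=
  forall a b : int, a *: v1 + b *: v2 = 0 -> a = 0 /\ b = 0.

Section Period.
Variable R : realType.
Local Notation C := (R[i]).

Definition intC (x : int) : C := x%:~R.
Definition toC (v : 'rV[int]_20) : 'rV[C]_20 := map_mx intC v.
Definition bilC (z w : 'rV[C]_20) : C := (z *m map_mx intC Gram8 *m w^T) 0 0.

(* [z] in D_{Lambda_8}: z^2 = 0 and z . zbar > 0 (these conditions are
   homogeneous, so they are conditions on the projective point [z]) *)
Definition in_D (z : 'rV[C]_20) : Prop :=
  bilC z z = 0 /\ 0 < bilC z (map_mx conjc z).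

Definition in_Dv (v : 'rV[int]_20) (z : 'rV[C]_20) : Prop :=
  in_D z /\ bilC z (toC v) = 0.

(* [z] and [z'] have the same image in F_8 = Gamma \ D *)
Definition sameF (z z' : 'rV[C]_20) : Prop :=
  exists g : 'M[int]_20, in_Gamma g /\
    exists c : C, c != 0 /\ z' = c *: (z *m map_mx intC g).

(* [z] lies in the union of the D_v, v unigonal / hyperelliptic; the image
   of such [z] in F_8 is exactly H_u / H_h *)
Definition in_union_unigonal (z : 'rV[C]_20) : Prop :=
  exists v, unigonal v /\ in_Dv v z.
Definition in_union_hyperelliptic (z : 'rV[C]_20) : Prop :=
  exists v, hyperelliptic v /\ in_Dv v z.

Definition in_union_Hu2 (z : 'rV[C]_20) : Prop :=
  exists v1 v2, in_unigonal_orbit v1 /\ in_unigonal_orbit v2 /\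
    lin_indep2 v1 v2 /\ in_Dv v1 z /\ in_Dv v2 z.

End Period.

(* Main.v *)
Require Import Defs.
From HB Require Import structures.
From mathcomp Require Import all_boot all_order all_algebra.
From mathcomp Require Import complex.
From mathcomp Require Import reals.
From mathcomp Require Import zify ring lra.
Set Implicit Arguments. Unset Strict Implicit. Unset Printing Implicit Defensive.
Import Order.TTheory GRing.Theory Num.Theory.
Local Open Scope complex_scope.
Local Open Scope ring_scope.
Definition TAB : seq (seq int) := [:: [:: 0; 1; 0; 0; 0; 0; 0; 0; 0; 0; 0; 0; 0; 0; 0; 0; 0; 0; 0; 0];
 [:: 1; 0; 0; 0; 0; 0; 0; 0; 0; 0; 0; 0; 0; 0; 0; 0; 0; 0; 0; 0];
 [:: 0; 0; 0; 1; 0; 0; 0; 0; 0; 0; 0; 0; 0; 0; 0; 0; 0; 0; 0; 0];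
 [:: 0; 0; 1; 0; 0; 0; 0; 0; 0; 0; 0; 0; 0; 0; 0; 0; 0; 0; 0; 0];
 [:: 0; 0; 0; 0; (-2)%Z; 0; 1; 0; 0; 0; 0; 0; 0; 0; 0; 0; 0; 0; 0; 0];
 [:: 0; 0; 0; 0; 0; (-2)%Z; 0; 1; 0; 0; 0; 0; 0; 0; 0; 0; 0; 0; 0; 0];
 [:: 0; 0; 0; 0; 1; 0; (-2)%Z; 1; 0; 0; 0; 0; 0; 0; 0; 0; 0; 0; 0; 0];
 [:: 0; 0; 0; 0; 0; 1; 1; (-2)%Z; 1; 0; 0; 0; 0; 0; 0; 0; 0; 0; 0; 0];
 [:: 0; 0; 0; 0; 0; 0; 0; 1; (-2)%Z; 1; 0; 0; 0; 0; 0; 0; 0; 0; 0; 0];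
 [:: 0; 0; 0; 0; 0; 0; 0; 0; 1; (-2)%Z; 1; 0; 0; 0; 0; 0; 0; 0; 0; 0];
 [:: 0; 0; 0; 0; 0; 0; 0; 0; 0; 1; (-2)%Z; 1; 0; 0; 0; 0; 0; 0; 0; 0];
 [:: 0; 0; 0; 0; 0; 0; 0; 0; 0; 0; 1; (-2)%Z; 0; 0; 0; 0; 0; 0; 0; 0];
 [:: 0; 0; 0; 0; 0; 0; 0; 0; 0; 0; 0; 0; (-2)%Z; 0; 1; 0; 0; 0; 0; 0];
 [:: 0; 0; 0; 0; 0; 0; 0; 0; 0; 0; 0; 0; 0; (-2)%Z; 0; 1; 0; 0; 0; 0];
 [:: 0; 0; 0; 0; 0; 0; 0; 0; 0; 0; 0; 0; 1; 0; (-2)%Z; 1; 0; 0; 0; 0];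
 [:: 0; 0; 0; 0; 0; 0; 0; 0; 0; 0; 0; 0; 0; 1; 1; (-2)%Z; 1; 0; 0; 0];
 [:: 0; 0; 0; 0; 0; 0; 0; 0; 0; 0; 0; 0; 0; 0; 0; 1; (-2)%Z; 1; 0; 0];
 [:: 0; 0; 0; 0; 0; 0; 0; 0; 0; 0; 0; 0; 0; 0; 0; 0; 1; (-2)%Z; 1; 0];
 [:: 0; 0; 0; 0; 0; 0; 0; 0; 0; 0; 0; 0; 0; 0; 0; 0; 0; 1; (-2)%Z; 0];
 [:: 0; 0; 0; 0; 0; 0; 0; 0; 0; 0; 0; 0; 0; 0; 0; 0; 0; 0; 0; (-2)%Z]].
Definition tab (i j : nat) : int := nth 0%Z (nth [::] TAB i) j.

Definition gcodef (m : nat) (f g : nat -> nat -> int) (i j : nat) : int :=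
  if (i < m)%N then (if (j < m)%N then f i j else 0) else
  if (j < m)%N then 0 else g (i - m)%N (j - m)%N.
Definition graphf (d : int) (e : seq (nat*nat)) (i j : nat) : int :=
  if i == j then d else if ((i,j) \in e) || ((j,i) \in e) then 1 else 0.
Lemma graph_mxE n d e (i j : 'I_n) : graph_mx n d e i j = graphf d e i j.
Proof. by rewrite mxE. Qed.
Lemma dsumE m n (A : 'M[int]_m) (B : 'M[int]_n) (f g : nat -> nat -> int)
  (HA : forall i j : 'I_m, A i j = f i j) (HB : forall i j : 'I_n, B i j = g i j)
  (i j : 'I_(m+n)) : dsum A B i j = gcodef m f g i j.
Proof.
rewrite /dsum /gcodef.
case: (split_ordP i) => i' ->; case: (split_ordP j) => j' ->.
- by rewrite block_mxEul /=.
- by rewrite block_mxEur /= mxE.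
- by rewrite block_mxEdl /= mxE.
- by rewrite block_mxEdr HB /= !addKn.
Qed.
Definition G8f := gcodef 2 (graphf 0 [:: (0, 1)]%N)
  (gcodef 2 (graphf 0 [:: (0, 1)]%N)
  (gcodef 8 (graphf (-2) [:: (0,2); (2,3); (3,4); (4,5); (5,6); (6,7); (1,3)]%N)
  (gcodef 7 (graphf (-2) [:: (0,2); (2,3); (3,4); (4,5); (5,6); (1,3)]%N)
   (graphf (-2) [::])))).
Lemma Gram8E (i j : 'I_20) : Gram8 i j = G8f i j.
Proof.
rewrite /Gram8 /G8f.
apply: dsumE => [a b|a b]; first exact: graph_mxE.
apply: dsumE => [a' b'|a' b']; first exact: graph_mxE.
apply: dsumE => [a2 b2|a2 b2]; first exact: graph_mxE.
apply: dsumE => [a3 b3|a3 b3]; exact: graph_mxE.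
Qed.
Lemma G8f_tab_all : all (fun i => all (fun j => G8f i j == tab i j) (iota 0 20)) (iota 0 20).
Proof. by vm_compute. Qed.
Lemma Gram8_tab (i j : 'I_20) : Gram8 i j = tab i j.
Proof.
rewrite Gram8E. move: G8f_tab_all => /allP /(_ i) H.
have Hi : (nat_of_ord i \in iota 0 20) by rewrite mem_iota /=.
have Hj : (nat_of_ord j \in iota 0 20) by rewrite mem_iota /=.
by move: (H Hi) => /allP /(_ _ Hj) /eqP.
Qed.

Definition GrR (R : comNzRingType) : 'M[R]_20 := map_mx (fun k : int => k%:~R : R) Gram8.
Definition ent (R : Type) (x : 'rV[R]_20) (k : nat) : R := x 0 (inord k).
Arguments ent {R} x k : simpl never.

Lemma sum20 (R : comNzRingType) (F : 'I_20 -> R) :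
  \sum_(i < 20) F i = \sum_(0 <= k < 20) F (inord k).
Proof.
rewrite big_mkord; apply: eq_bigr => i _.
by rewrite inord_val.
Qed.

Lemma bil_dsum (R : comNzRingType) (x y : 'rV[R]_20) :
  (x *m GrR R *m y^T) 0 0 =
  \sum_(0 <= j < 20) \sum_(0 <= k < 20) ent x k * (tab k j)%:~R * ent y j.
Proof.
rewrite mxE sum20; apply: eq_big_nat => j /andP[_ Hj].
rewrite [(x *m _) _ _]mxE sum20 big_distrl /=; apply: eq_big_nat => k /andP[_ Hk].
rewrite /ent [y^T _ _]mxE /GrR [map_mx _ _ _ _]mxE Gram8_tab !inordK //.
Qed.

Lemma sum20u (R : comNzRingType) (F : nat -> R) :
  \sum_(0 <= k < 20) F k = F 0%N + F 1%N + F 2%N + F 3%N + F 4%N + F 5%N + F 6%N + F 7%N + F 8%N + F 9%N + F 10%N + F 11%N + F 12%N + F 13%N + F 14%N + F 15%N + F 16%N + F 17%N + F 18%N + F 19%N.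
Proof. by do 20 (rewrite big_ltn //); rewrite big_geq // !addrA addr0. Qed.
Definition bilR {R : comNzRingType} (x y : 'rV[R]_20) : R :=
  ent x 1 * ent y 0 + ent x 0 * ent y 1 + ent x 3 * ent y 2 + ent x 2 * ent y 3 + (-2) * (ent x 4 * ent y 4) + ent x 6 * ent y 4 + (-2) * (ent x 5 * ent y 5) + ent x 7 * ent y 5 + ent x 4 * ent y 6 + (-2) * (ent x 6 * ent y 6) + ent x 7 * ent y 6 + ent x 5 * ent y 7 + ent x 6 * ent y 7 + (-2) * (ent x 7 * ent y 7) + ent x 8 * ent y 7 + ent x 7 * ent y 8 + (-2) * (ent x 8 * ent y 8) + ent x 9 * ent y 8 + ent x 8 * ent y 9 + (-2) * (ent x 9 * ent y 9) + ent x 10 * ent y 9 + ent x 9 * ent y 10 + (-2) * (ent x 10 * ent y 10) + ent x 11 * ent y 10 + ent x 10 * ent y 11 + (-2) * (ent x 11 * ent y 11) + (-2) * (ent x 12 * ent y 12) + ent x 14 * ent y 12 + (-2) * (ent x 13 * ent y 13) + ent x 15 * ent y 13 + ent x 12 * ent y 14 + (-2) * (ent x 14 * ent y 14) + ent x 15 * ent y 14 + ent x 13 * ent y 15 + ent x 14 * ent y 15 + (-2) * (ent x 15 * ent y 15) + ent x 16 * ent y 15 + ent x 15 * ent y 16 + (-2) * (ent x 16 * ent y 16) + ent x 17 * ent y 16 + ent x 16 * ent y 17 + (-2) * (ent x 17 * ent y 17) + ent x 18 * ent y 17 + ent x 17 * ent y 18 + (-2) * (ent x 18 * ent y 18) +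 (-2) * (ent x 19 * ent y 19).

Lemma bilRE (R : comNzRingType) (x y : 'rV[R]_20) :
  (x *m GrR R *m y^T) 0 0 = bilR x y.
Proof.
rewrite bil_dsum !sum20u /tab /=.
rewrite /bilR; ring.
Qed.


Lemma entD (R : comNzRingType) (x y : 'rV[R]_20) k : ent (x + y) k = ent x k + ent y k.
Proof. by rewrite /ent mxE. Qed.
Lemma entZ (R : comNzRingType) (a : R) (x : 'rV[R]_20) k : ent (a *: x) k = a * ent x k.
Proof. by rewrite /ent mxE. Qed.
Lemma entN (R : comNzRingType) (x : 'rV[R]_20) k : ent (- x) k = - ent x k.
Proof. by rewrite /ent mxE. Qed.
Lemma entB (R : comNzRingType) (x y : 'rV[R]_20) k : ent (x - y) k = ent x k - ent y k.
Proof. by rewrite /ent !mxE. Qed.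
Lemma ent0 (R : comNzRingType) k : ent (0 : 'rV[R]_20) k = 0.
Proof. by rewrite /ent mxE. Qed.
Lemma ent_map (R S : comNzRingType) (f : R -> S) (x : 'rV[R]_20) k :
  ent (map_mx f x) k = f (ent x k).
Proof. by rewrite /ent mxE. Qed.

Lemma ent_eq0 (R : comNzRingType) (u : 'rV[R]_20) :
  (forall k, (k < 20)%N -> ent u k = 0) -> u = 0.
Proof.
move=> H; apply/rowP => j; rewrite mxE.
have := H (nat_of_ord j) (ltn_ord j); by rewrite /ent inord_val.
Qed.

Lemma bilR_sym (R : comNzRingType) (x y : 'rV[R]_20) : bilR x y = bilR y x.
Proof. rewrite /bilR; ring. Qed.

Lemma bilR_comb (R : comNzRingType) (a b c d : R) (p q : 'rV[R]_20) :
  bilR (a *: p + b *: q) (c *: p + d *: q) =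
  a * c * bilR p p + (a * d + b * c) * bilR p q + b * d * bilR q q.
Proof. rewrite /bilR !entD !entZ; ring. Qed.

Lemma bilR_comb3 (R : comNzRingType) (a b c : R) (p q r : 'rV[R]_20) :
  bilR (a *: p + b *: q + c *: r) (a *: p + b *: q + c *: r) =
  a ^+ 2 * bilR p p + b ^+ 2 * bilR q q + c ^+ 2 * bilR r r
  + 2 * a * b * bilR p q + 2 * a * c * bilR p r + 2 * b * c * bilR q r.
Proof. rewrite /bilR !entD !entZ; ring. Qed.

Lemma bilR_linl (R : comNzRingType) (a : R) (p q r : 'rV[R]_20) :
  bilR (p + a *: q) r = bilR p r + a * bilR q r.
Proof. rewrite /bilR !entD !entZ; ring. Qed.

Lemma bilR_Bl (R : comNzRingType) (p q r : 'rV[R]_20) :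
  bilR r (p - q) = bilR r p - bilR r q.
Proof. rewrite /bilR !entB; ring. Qed.

Lemma bilR_Dl (R : comNzRingType) (p q r : 'rV[R]_20) :
  bilR r (p + q) = bilR r p + bilR r q.
Proof. rewrite /bilR !entD; ring. Qed.

Lemma sos_id (R : comNzRingType) (u : 'rV[R]_20) :
  ent u 1 = - ent u 0 -> ent u 3 = - ent u 2 ->
  60 * bilR u u = - (120 * (ent u 0) ^+ 2 + 120 * (ent u 2) ^+ 2 + 30 * (2 * ent u 4 - 1 * ent u 6) ^+ 2 + 30 * (2 * ent u 5 - 1 * ent u 7) ^+ 2 + 10 * (3 * ent u 6 - 2 * ent u 7) ^+ 2 + 2 * (5 * ent u 7 - 6 * ent u 8) ^+ 2 + 3 * (4 * ent u 8 - 5 * ent u 9) ^+ 2 + 5 * (3 * ent u 9 - 4 * ent u 10) ^+ 2 + 10 * (2 * ent u 10 - 3 * ent u 11) ^+ 2 + 30 * (ent u 11) ^+ 2 + 30 * (2 * ent u 12 - 1 * ent u 14) ^+ 2 + 30 * (2 * ent u 13 - 1 * ent u 15) ^+ 2 + 10 * (3 * ent u 14 - 2 * ent u 15) ^+ 2 + 2 * (5 * ent u 15 - 6 * ent u 16) ^+ 2 + 3 * (4 * ent u 16 - 5 * ent u 17) ^+ 2 + 5 * (3 * ent u 17 - 4 * ent u 18) ^+ 2 + 40 * (ent u 18) ^+ 2 + 120 * (ent u 19) ^+ 2).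
Proof. move=> e1 e3; rewrite /bilR e1 e3; ring. Qed.




Lemma neg18 (R : realFieldType) (B a0 a1 a2 a3 a4 a5 a6 a7 a8 a9 a10 a11 a12 a13 a14 a15 a16 a17 : R) :
  0 <= a0 -> 0 <= a1 -> 0 <= a2 -> 0 <= a3 -> 0 <= a4 -> 0 <= a5 -> 0 <= a6 -> 0 <= a7 -> 0 <= a8 -> 0 <= a9 -> 0 <= a10 -> 0 <= a11 -> 0 <= a12 -> 0 <= a13 -> 0 <= a14 -> 0 <= a15 -> 0 <= a16 -> 0 <= a17 -> 60 * B = - (a0 + a1 + a2 + a3 + a4 + a5 + a6 + a7 + a8 + a9 + a10 + a11 + a12 + a13 + a14 + a15 + a16 + a17) ->
  B <= 0 /\ (B = 0 -> a0 = 0 /\ a1 = 0 /\ a2 = 0 /\ a3 = 0 /\ a4 = 0 /\ a5 = 0 /\ a6 = 0 /\ a7 = 0 /\ a8 = 0 /\ a9 = 0 /\ a10 = 0 /\ a11 = 0 /\ a12 = 0 /\ a13 = 0 /\ a14 = 0 /\ a15 = 0 /\ a16 = 0 /\ a17 = 0).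
Proof. move=> h0 h1 h2 h3 h4 h5 h6 h7 h8 h9 h10 h11 h12 h13 h14 h15 h16 h17 H; split; [lra|move=> HB; lra]. Qed.
Lemma negL (R : realFieldType) (u : 'rV[R]_20) :
  ent u 0 + ent u 1 = 0 -> ent u 2 + ent u 3 = 0 ->
  bilR u u <= 0 /\ (bilR u u = 0 -> u = 0).
Proof.
move=> ha hc.
have e1 : ent u 1 = - ent u 0 by lra.
have e3 : ent u 3 = - ent u 2 by lra.
have H := sos_id e1 e3.
have h0 : 0 <= 120 * (ent u 0) ^+ 2 by rewrite mulr_ge0 // sqr_ge0.
have h1 : 0 <= 120 * (ent u 2) ^+ 2 by rewrite mulr_ge0 // sqr_ge0.
have h2 : 0 <= 30 * (2 * ent u 4 - 1 * ent u 6) ^+ 2 by rewrite mulr_ge0 // sqr_ge0.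
have h3 : 0 <= 30 * (2 * ent u 5 - 1 * ent u 7) ^+ 2 by rewrite mulr_ge0 // sqr_ge0.
have h4 : 0 <= 10 * (3 * ent u 6 - 2 * ent u 7) ^+ 2 by rewrite mulr_ge0 // sqr_ge0.
have h5 : 0 <= 2 * (5 * ent u 7 - 6 * ent u 8) ^+ 2 by rewrite mulr_ge0 // sqr_ge0.
have h6 : 0 <= 3 * (4 * ent u 8 - 5 * ent u 9) ^+ 2 by rewrite mulr_ge0 // sqr_ge0.
have h7 : 0 <= 5 * (3 * ent u 9 - 4 * ent u 10) ^+ 2 by rewrite mulr_ge0 // sqr_ge0.
have h8 : 0 <= 10 * (2 * ent u 10 - 3 * ent u 11) ^+ 2 by rewrite mulr_ge0 // sqr_ge0.
have h9 : 0 <= 30 * (ent u 11) ^+ 2 by rewrite mulr_ge0 // sqr_ge0.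
have h10 : 0 <= 30 * (2 * ent u 12 - 1 * ent u 14) ^+ 2 by rewrite mulr_ge0 // sqr_ge0.
have h11 : 0 <= 30 * (2 * ent u 13 - 1 * ent u 15) ^+ 2 by rewrite mulr_ge0 // sqr_ge0.
have h12 : 0 <= 10 * (3 * ent u 14 - 2 * ent u 15) ^+ 2 by rewrite mulr_ge0 // sqr_ge0.
have h13 : 0 <= 2 * (5 * ent u 15 - 6 * ent u 16) ^+ 2 by rewrite mulr_ge0 // sqr_ge0.
have h14 : 0 <= 3 * (4 * ent u 16 - 5 * ent u 17) ^+ 2 by rewrite mulr_ge0 // sqr_ge0.
have h15 : 0 <= 5 * (3 * ent u 17 - 4 * ent u 18) ^+ 2 by rewrite mulr_ge0 // sqr_ge0.
have h16 : 0 <= 40 * (ent u 18) ^+ 2 by rewrite mulr_ge0 // sqr_ge0.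
have h17 : 0 <= 120 * (ent u 19) ^+ 2 by rewrite mulr_ge0 // sqr_ge0.
have [Hle Heq] := neg18 h0 h1 h2 h3 h4 h5 h6 h7 h8 h9 h10 h11 h12 h13 h14 h15 h16 h17 H.
split=> // H0.
have [q0 [q1 [q2 [q3 [q4 [q5 [q6 [q7 [q8 [q9 [q10 [q11 [q12 [q13 [q14 [q15 [q16 q17]]]]]]]]]]]]]]]]] := Heq H0.
have z0 : (ent u 0) = 0.
  by move: q0 => /eqP; rewrite mulf_eq0 pnatr_eq0 /= expf_eq0 /= => /eqP.
have z1 : (ent u 2) = 0.
  by move: q1 => /eqP; rewrite mulf_eq0 pnatr_eq0 /= expf_eq0 /= => /eqP.
have z2 : (2 * ent u 4 - 1 * ent u 6) = 0.
  by move: q2 => /eqP; rewrite mulf_eq0 pnatr_eq0 /= expf_eq0 /= => /eqP.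
have z3 : (2 * ent u 5 - 1 * ent u 7) = 0.
  by move: q3 => /eqP; rewrite mulf_eq0 pnatr_eq0 /= expf_eq0 /= => /eqP.
have z4 : (3 * ent u 6 - 2 * ent u 7) = 0.
  by move: q4 => /eqP; rewrite mulf_eq0 pnatr_eq0 /= expf_eq0 /= => /eqP.
have z5 : (5 * ent u 7 - 6 * ent u 8) = 0.
  by move: q5 => /eqP; rewrite mulf_eq0 pnatr_eq0 /= expf_eq0 /= => /eqP.
have z6 : (4 * ent u 8 - 5 * ent u 9) = 0.
  by move: q6 => /eqP; rewrite mulf_eq0 pnatr_eq0 /= expf_eq0 /= => /eqP.
have z7 : (3 * ent u 9 - 4 * ent u 10) = 0.
  by move: q7 => /eqP; rewrite mulf_eq0 pnatr_eq0 /= expf_eq0 /= => /eqP.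
have z8 : (2 * ent u 10 - 3 * ent u 11) = 0.
  by move: q8 => /eqP; rewrite mulf_eq0 pnatr_eq0 /= expf_eq0 /= => /eqP.
have z9 : (ent u 11) = 0.
  by move: q9 => /eqP; rewrite mulf_eq0 pnatr_eq0 /= expf_eq0 /= => /eqP.
have z10 : (2 * ent u 12 - 1 * ent u 14) = 0.
  by move: q10 => /eqP; rewrite mulf_eq0 pnatr_eq0 /= expf_eq0 /= => /eqP.
have z11 : (2 * ent u 13 - 1 * ent u 15) = 0.
  by move: q11 => /eqP; rewrite mulf_eq0 pnatr_eq0 /= expf_eq0 /= => /eqP.
have z12 : (3 * ent u 14 - 2 * ent u 15) = 0.
  by move: q12 => /eqP; rewrite mulf_eq0 pnatr_eq0 /= expf_eq0 /= => /eqP.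
have z13 : (5 * ent u 15 - 6 * ent u 16) = 0.
  by move: q13 => /eqP; rewrite mulf_eq0 pnatr_eq0 /= expf_eq0 /= => /eqP.
have z14 : (4 * ent u 16 - 5 * ent u 17) = 0.
  by move: q14 => /eqP; rewrite mulf_eq0 pnatr_eq0 /= expf_eq0 /= => /eqP.
have z15 : (3 * ent u 17 - 4 * ent u 18) = 0.
  by move: q15 => /eqP; rewrite mulf_eq0 pnatr_eq0 /= expf_eq0 /= => /eqP.
have z16 : (ent u 18) = 0.
  by move: q16 => /eqP; rewrite mulf_eq0 pnatr_eq0 /= expf_eq0 /= => /eqP.
have z17 : (ent u 19) = 0.
  by move: q17 => /eqP; rewrite mulf_eq0 pnatr_eq0 /= expf_eq0 /= => /eqP.
clear -ha hc z0 z1 z2 z3 z4 z5 z6 z7 z8 z9 z10 z11 z12 z13 z14 z15 z16 z17.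
apply: ent_eq0 => k hk.
do 20 (case: k hk => [|k] hk; [lra|]).
by [].
Qed.

Lemma negL1 (R : realFieldType) (u : 'rV[R]_20) :
  ent u 0 + ent u 1 = 0 -> ent u 2 + ent u 3 = 0 -> bilR u u <= 0.
Proof. by move=> ha hc; case: (negL ha hc). Qed.

Lemma sq0 (R : realFieldType) (a b t : R) : 0 < t -> a * a * t + b * b * t <= 0 -> a = 0.
Proof.
move=> t0 h.
have h1 : a * a <= 0 by nra.
have h2 : 0 <= a * a by rewrite -expr2 sqr_ge0.
have /eqP : a * a = 0 by lra.
by rewrite mulf_eq0 orbb => /eqP.
Qed.

Lemma sq3 (R : realFieldType) (a b c t : R) : 0 < t -> 0 <= c ->
  c + a ^+ 2 * t + b ^+ 2 * t <= 0 -> a = 0 /\ b = 0 /\ c = 0.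
Proof.
move=> t0 c0 h.
have ha : 0 <= a ^+ 2 * t by rewrite mulr_ge0 ?sqr_ge0 // ltW.
have hb : 0 <= b ^+ 2 * t by rewrite mulr_ge0 ?sqr_ge0 // ltW.
have ea : a ^+ 2 * t = 0 by lra.
have eb : b ^+ 2 * t = 0 by lra.
have ec : c = 0 by lra.
move/eqP: ea; move/eqP: eb; rewrite !mulf_eq0 (gt_eqF t0) !orbF !orbb => /eqP -> /eqP ->.
by [].
Qed.

Local Notation Pa v := (ent v 0 + ent v 1).
Local Notation Pc v := (ent v 2 + ent v 3).

Lemma realC (R : realFieldType) (x y w : 'rV[R]_20) (t : R) :
  0 < t -> bilR x x = t -> bilR y y = t -> bilR x y = 0 ->
  bilR x w = 0 -> bilR y w = 0 -> 0 <= bilR w w -> w = 0.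
Proof.
move=> t0 hxx hyy hxy hxw hyw hww.
have hyx : bilR y x = 0 by rewrite bilR_sym.
have hwx : bilR w x = 0 by rewrite bilR_sym.
have hwy : bilR w y = 0 by rewrite bilR_sym.
have hD : Pa x * Pc y - Pc x * Pa y != 0.
  apply/negP => /eqP hD.
  have H1 : bilR (Pa y *: x + (- Pa x) *: y) (Pa y *: x + (- Pa x) *: y) <= 0.
    by apply: negL1; rewrite !entD !entZ; lra.
  have H2 : bilR (Pc y *: x + (- Pc x) *: y) (Pc y *: x + (- Pc x) *: y) <= 0.
    by apply: negL1; rewrite !entD !entZ; lra.
  rewrite bilR_comb hxx hyy hxy in H1.
  rewrite bilR_comb hxx hyy hxy in H2.
  have e1 : Pa x = 0 by apply: (sq0 (b := Pa y) t0); nra.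
  have e2 : Pc x = 0 by apply: (sq0 (b := Pc y) t0); nra.
  have H3 : bilR x x <= 0 by apply: negL1.
  lra.
pose D := Pa x * Pc y - Pc x * Pa y.
pose al := Pa w * Pc y - Pc w * Pa y.
pose be := Pa x * Pc w - Pc x * Pa w.
have ha : Pa (D *: w + (- al) *: x + (- be) *: y) = 0.
  by rewrite !entD !entZ /D /al /be; lra.
have hc : Pc (D *: w + (- al) *: x + (- be) *: y) = 0.
  by rewrite !entD !entZ /D /al /be; lra.
have [H1 H2] := negL ha hc.
rewrite bilR_comb3 hxx hyy hwx hwy hxy in H1 H2.
have hD2 : 0 < D ^+ 2 by rewrite exprn_even_gt0.
rewrite !mulr0 !addr0 !sqrrN in H1.
have c0 : 0 <= D ^+ 2 * bilR w w by rewrite mulr_ge0 // ltW.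
have [hal [hbe hc0]] := sq3 t0 c0 H1.
have hw0 : bilR w w = 0.
  by move: hc0 => /eqP; rewrite mulf_eq0 (gt_eqF hD2) /= => /eqP.
have := H2 ltac:(rewrite hal hbe hw0; lra).
rewrite hal hbe !oppr0 !scale0r !addr0 => /eqP.
by rewrite scaler_eq0 (negbTE hD) /= => /eqP.
Qed.





Lemma cplx0 (R : rcfType) (a b : R) : a%:C + 'i * b%:C = 0 -> a = 0 /\ b = 0.
Proof.
move=> h.
have h1 := congr1 (@complex.Re R) h; have h2 := congr1 (@complex.Im R) h.
by move: h1 h2; simpc => /= -> ->.
Qed.

Lemma bilR_map (R S : comNzRingType) (f : {rmorphism R -> S}) (x y : 'rV[R]_20) :
  bilR (map_mx f x) (map_mx f y) = f (bilR x y).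
Proof.
rewrite /bilR !ent_map.
by rewrite !rmorphD !rmorphM !rmorphN rmorph_nat.
Qed.

Lemma bilR_intr (R : comNzRingType) (x y : 'rV[int]_20) :
  bilR (map_mx (fun k : int => k%:~R : R) x) (map_mx (fun k : int => k%:~R : R) y)
  = (bilR x y)%:~R.
Proof.
exact: (@bilR_map _ _ ( *~%R (1 : R)) x y).
Qed.

Lemma bilC_R (R : realType) (z w : 'rV[R[i]]_20) : bilC z w = bilR z w.
Proof. by rewrite /bilC -bilRE. Qed.

Lemma zdec (R : rcfType) (z : 'rV[R[i]]_20) :
  z = 1 *: map_mx (real_complex R) (map_mx (@complex.Re R) z)
      + 'i *: map_mx (real_complex R) (map_mx (@complex.Im R) z).
Proof. apply/rowP => j; rewrite !mxE mul1r; exact: complexE. Qed.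

Lemma conjdec (R : rcfType) (z : 'rV[R[i]]_20) :
  map_mx conjc z = 1 *: map_mx (real_complex R) (map_mx (@complex.Re R) z)
      + (- 'i) *: map_mx (real_complex R) (map_mx (@complex.Im R) z).
Proof.
apply/rowP => j; rewrite !mxE mul1r; case: (z 0 j) => a b /=.
by simpc.
Qed.

Lemma ii (R : rcfType) : 'i * 'i = -1 :> R[i].
Proof. by rewrite -expr2 sqr_i. Qed.

Lemma inD_real (R : realType) (z : 'rV[R[i]]_20) : in_D z ->
  bilR (map_mx (@complex.Re R) z) (map_mx (@complex.Re R) z) =
  bilR (map_mx (@complex.Im R) z) (map_mx (@complex.Im R) z) /\
  bilR (map_mx (@complex.Re R) z) (map_mx (@complex.Im R) z) = 0 /\
  0 < bilR (map_mx (@complex.Re R) z) (map_mx (@complex.Re R) z).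
Proof.
move=> [h1 h2].
rewrite !bilC_R in h1 h2.
move: h1 h2.
set x := map_mx (@complex.Re R) z.
set y := map_mx (@complex.Im R) z.
have hii : (Complex 0 1) * (Complex 0 1) = -1 :> R[i] by rewrite -expr2 sqr_i.
have e := zdec z; have ec := conjdec z; rewrite -/x -/y in e ec.
rewrite ec {1 2 3}e !bilR_comb !bilR_map => h1 h2.
have h1' : (bilR x x - bilR y y)%:C + 'i * (2 * bilR x y)%:C = 0.
  rewrite -h1 hii rmorphB rmorphM rmorph_nat; ring.
have h2' : (0 : R)%:C < (bilR x x + bilR y y)%:C.
  rewrite rmorphD /=; move: h2; rewrite !mulrN hii opprK; congr (_ < _); ring.
case: (cplx0 h1') => a b.
rewrite ltcR in h2'.
split; first lra.
split; first by move/eqP: b; rewrite mulf_eq0 pnatr_eq0 /= => /eqP.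
lra.
Qed.

Lemma bilR_lin2 (R : comNzRingType) (a b : R) (p q r : 'rV[R]_20) :
  bilR (a *: p + b *: q) r = a * bilR p r + b * bilR q r.
Proof. rewrite /bilR !entD !entZ; ring. Qed.

Lemma negC (R : realType) (z : 'rV[R[i]]_20) (w : 'rV[int]_20) :
  in_D z -> bilC z (toC R w) = 0 -> w != 0 -> bilR w w < 0.
Proof.
move=> hz hw hw0.
have [hxy [hx0 hpos]] := inD_real hz.
move: hxy hx0 hpos.
set x := map_mx (@complex.Re R) z.
set y := map_mx (@complex.Im R) z.
move=> hxy hx0 hpos.
set wr := map_mx (fun k : int => k%:~R : R) w.
have ht : toC R w = map_mx (real_complex R) wr.
  by apply/rowP => j; rewrite !mxE /intC rmorph_int.
have e := zdec z; rewrite -/x -/y in e.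
rewrite bilC_R ht {1}e bilR_lin2 !bilR_map mul1r in hw.
have [a b] := cplx0 hw.
rewrite ltNge; apply/negP => hle.
have hwr : 0 <= bilR wr wr by rewrite /wr bilR_intr ler0z.
have := realC hpos erefl (esym hxy) hx0 a b hwr.
move=> h0; move/negP: hw0; apply; apply/eqP/rowP => j.
move/rowP/(_ j): h0; rewrite !mxE => /eqP.
by rewrite intr_eq0 => /eqP.
Qed.



Definition kf (k : nat) : int := match k with 12 => 2 | 13 => 3 | 14 => 4 | 15 => 6 | 16 => 5 | 17 => 4 | 18 => 3 | _ => 0 end.
Definition af (k : nat) : int := match k with 19 => 1 | _ => 0 end.
Definition ej (j : nat) : 'rV[int]_20 := \row_(i < 20) (if (i : nat) == j then 1 else 0).
Lemma ent_ej j k : (k < 20)%N -> ent (ej j) k = if k == j then 1 else 0.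
Proof. by move=> hk; rewrite /ent mxE inordK. Qed.

Lemma bilE (v w : 'rV[int]_20) : bil v w = bilR v w.
Proof.
rewrite /bil -bilRE /GrR.
have -> : map_mx (fun k : int => k%:~R : int) Gram8 = Gram8.
  by apply/matrixP => i j; rewrite mxE intz.
by [].
Qed.

Definition qfF (y : nat -> int) : int :=
  (1) * (y 0 * y 1) + (1) * (y 2 * y 3) + (-1) * (y 4 * y 4) + (1) * (y 4 * y 6) + (-1) * (y 5 * y 5) + (1) * (y 5 * y 7) + (-1) * (y 6 * y 6) + (1) * (y 6 * y 7) + (-1) * (y 7 * y 7) + (1) * (y 7 * y 8) + (-1) * (y 8 * y 8) + (1) * (y 8 * y 9) + (-1) * (y 9 * y 9) + (1) * (y 9 * y 10) + (-1) * (y 10 * y 10) + (1) * (y 10 * y 11) + (-1) * (y 11 * y 11) + (-1) * (y 12 * y 12) + (1) * (y 12 * y 14) + (-1) * (y 13 * y 13) + (1) * (y 13 * y 15) + (-1) * (y 14 * y 14) + (1) * (y 14 * y 15) + (-1) * (y 15 * y 15) + (1) * (y 15 * y 16) + (-1) * (y 16 * y 16) + (1) * (y 16 * y 17) + (-1) * (y 17 * y 17) + (1) * (y 17 * y 18) + (-1) * (y 18 * y 18) + (-1) * (y 19 * y 19).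

Lemma decomp (v : 'rV[int]_20) : (forall w, (2 %| bil v w)%Z) ->
  forall i, (i < 20)%N -> (2 %| ent v i - ent v 13 * kf i - ent v 19 * af i)%Z.
Proof.
move=> H.

have d0 := H (ej 0); rewrite bilE /bilR !ent_ej //= in d0.
have d1 := H (ej 1); rewrite bilE /bilR !ent_ej //= in d1.
have d2 := H (ej 2); rewrite bilE /bilR !ent_ej //= in d2.
have d3 := H (ej 3); rewrite bilE /bilR !ent_ej //= in d3.
have d4 := H (ej 4); rewrite bilE /bilR !ent_ej //= in d4.
have d5 := H (ej 5); rewrite bilE /bilR !ent_ej //= in d5.
have d6 := H (ej 6); rewrite bilE /bilR !ent_ej //= in d6.
have d7 := H (ej 7); rewrite bilE /bilR !ent_ej //= in d7.
have d8 := H (ej 8); rewrite bilE /bilR !ent_ej //= in d8.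
have d9 := H (ej 9); rewrite bilE /bilR !ent_ej //= in d9.
have d10 := H (ej 10); rewrite bilE /bilR !ent_ej //= in d10.
have d11 := H (ej 11); rewrite bilE /bilR !ent_ej //= in d11.
have d12 := H (ej 12); rewrite bilE /bilR !ent_ej //= in d12.
have d13 := H (ej 13); rewrite bilE /bilR !ent_ej //= in d13.
have d14 := H (ej 14); rewrite bilE /bilR !ent_ej //= in d14.
have d15 := H (ej 15); rewrite bilE /bilR !ent_ej //= in d15.
have d16 := H (ej 16); rewrite bilE /bilR !ent_ej //= in d16.
have d17 := H (ej 17); rewrite bilE /bilR !ent_ej //= in d17.
have d18 := H (ej 18); rewrite bilE /bilR !ent_ej //= in d18.
have d19 := H (ej 19); rewrite bilE /bilR !ent_ej //= in d19.

clear H.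
case/dvdzP: d0 => m0 hm0.
case/dvdzP: d1 => m1 hm1.
case/dvdzP: d2 => m2 hm2.
case/dvdzP: d3 => m3 hm3.
case/dvdzP: d4 => m4 hm4.
case/dvdzP: d5 => m5 hm5.
case/dvdzP: d6 => m6 hm6.
case/dvdzP: d7 => m7 hm7.
case/dvdzP: d8 => m8 hm8.
case/dvdzP: d9 => m9 hm9.
case/dvdzP: d10 => m10 hm10.
case/dvdzP: d11 => m11 hm11.
case/dvdzP: d12 => m12 hm12.
case/dvdzP: d13 => m13 hm13.
case/dvdzP: d14 => m14 hm14.
case/dvdzP: d15 => m15 hm15.
case/dvdzP: d16 => m16 hm16.
case/dvdzP: d17 => m17 hm17.
case/dvdzP: d18 => m18 hm18.
case/dvdzP: d19 => m19 hm19.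
have v0 : (2 %| ent v 0 - ent v 13 * kf 0 - ent v 19 * af 0)%Z.
  clear -hm1 hm12 hm13 hm14 hm15 hm16 hm17 hm18; apply/dvdzP; exists ((1) * m1 + (-24) * m12 + (-42) * m13 + (-48) * m14 + (-72) * m15 + (-54) * m16 + (-36) * m17 + (-18) * m18 + (-6) * ent v 13); rewrite /=; lia.
have v1 : (2 %| ent v 1 - ent v 13 * kf 1 - ent v 19 * af 1)%Z.
  clear -hm0 hm12 hm13 hm14 hm15 hm16 hm17 hm18; apply/dvdzP; exists ((1) * m0 + (-24) * m12 + (-42) * m13 + (-48) * m14 + (-72) * m15 + (-54) * m16 + (-36) * m17 + (-18) * m18 + (-6) * ent v 13); rewrite /=; lia.
have v2 : (2 %| ent v 2 - ent v 13 * kf 2 - ent v 19 * af 2)%Z.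
  clear -hm3 hm12 hm13 hm14 hm15 hm16 hm17 hm18; apply/dvdzP; exists ((1) * m3 + (-24) * m12 + (-42) * m13 + (-48) * m14 + (-72) * m15 + (-54) * m16 + (-36) * m17 + (-18) * m18 + (-6) * ent v 13); rewrite /=; lia.
have v3 : (2 %| ent v 3 - ent v 13 * kf 3 - ent v 19 * af 3)%Z.
  clear -hm2 hm12 hm13 hm14 hm15 hm16 hm17 hm18; apply/dvdzP; exists ((1) * m2 + (-24) * m12 + (-42) * m13 + (-48) * m14 + (-72) * m15 + (-54) * m16 + (-36) * m17 + (-18) * m18 + (-6) * ent v 13); rewrite /=; lia.
have v4 : (2 %| ent v 4 - ent v 13 * kf 4 - ent v 19 * af 4)%Z.
  clear -hm4 hm5 hm6 hm7 hm8 hm9 hm10 hm11 hm12 hm13 hm14 hm15 hm16 hm17 hm18; apply/dvdzP; exists ((-4) * m4 + (-5) * m5 + (-7) * m6 + (-10) * m7 + (-8) * m8 + (-6) * m9 + (-4) * m10 + (-2) * m11 + (-24) * m12 + (-42) * m13 + (-48) * m14 + (-72) * m15 + (-54) * m16 + (-36) * m17 + (-18) * m18 + (-6) * ent v 13); rewrite /=; lia.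
have v5 : (2 %| ent v 5 - ent v 13 * kf 5 - ent v 19 * af 5)%Z.
  clear -hm4 hm5 hm6 hm7 hm8 hm9 hm10 hm11 hm12 hm13 hm14 hm15 hm16 hm17 hm18; apply/dvdzP; exists ((-5) * m4 + (-8) * m5 + (-10) * m6 + (-15) * m7 + (-12) * m8 + (-9) * m9 + (-6) * m10 + (-3) * m11 + (-24) * m12 + (-42) * m13 + (-48) * m14 + (-72) * m15 + (-54) * m16 + (-36) * m17 + (-18) * m18 + (-6) * ent v 13); rewrite /=; lia.
have v6 : (2 %| ent v 6 - ent v 13 * kf 6 - ent v 19 * af 6)%Z.
  clear -hm4 hm5 hm6 hm7 hm8 hm9 hm10 hm11 hm12 hm13 hm14 hm15 hm16 hm17 hm18; apply/dvdzP; exists ((-7) * m4 + (-10) * m5 + (-14) * m6 + (-20) * m7 + (-16) * m8 + (-12) * m9 + (-8) * m10 + (-4) * m11 + (-24) * m12 + (-42) * m13 + (-48) * m14 + (-72) * m15 + (-54) * m16 + (-36) * m17 + (-18) * m18 + (-6) * ent v 13); rewrite /=; lia.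
have v7 : (2 %| ent v 7 - ent v 13 * kf 7 - ent v 19 * af 7)%Z.
  clear -hm4 hm5 hm6 hm7 hm8 hm9 hm10 hm11 hm12 hm13 hm14 hm15 hm16 hm17 hm18; apply/dvdzP; exists ((-10) * m4 + (-15) * m5 + (-20) * m6 + (-30) * m7 + (-24) * m8 + (-18) * m9 + (-12) * m10 + (-6) * m11 + (-24) * m12 + (-42) * m13 + (-48) * m14 + (-72) * m15 + (-54) * m16 + (-36) * m17 + (-18) * m18 + (-6) * ent v 13); rewrite /=; lia.
have v8 : (2 %| ent v 8 - ent v 13 * kf 8 - ent v 19 * af 8)%Z.
  clear -hm4 hm5 hm6 hm7 hm8 hm9 hm10 hm11 hm12 hm13 hm14 hm15 hm16 hm17 hm18; apply/dvdzP; exists ((-8) * m4 + (-12) * m5 + (-16) * m6 + (-24) * m7 + (-20) * m8 + (-15) * m9 + (-10) * m10 + (-5) * m11 + (-24) * m12 + (-42) * m13 + (-48) * m14 + (-72) * m15 + (-54) * m16 + (-36) * m17 + (-18) * m18 + (-6) * ent v 13); rewrite /=; lia.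
have v9 : (2 %| ent v 9 - ent v 13 * kf 9 - ent v 19 * af 9)%Z.
  clear -hm4 hm5 hm6 hm7 hm8 hm9 hm10 hm11 hm12 hm13 hm14 hm15 hm16 hm17 hm18; apply/dvdzP; exists ((-6) * m4 + (-9) * m5 + (-12) * m6 + (-18) * m7 + (-15) * m8 + (-12) * m9 + (-8) * m10 + (-4) * m11 + (-24) * m12 + (-42) * m13 + (-48) * m14 + (-72) * m15 + (-54) * m16 + (-36) * m17 + (-18) * m18 + (-6) * ent v 13); rewrite /=; lia.
have v10 : (2 %| ent v 10 - ent v 13 * kf 10 - ent v 19 * af 10)%Z.
  clear -hm4 hm5 hm6 hm7 hm8 hm9 hm10 hm11 hm12 hm13 hm14 hm15 hm16 hm17 hm18; apply/dvdzP; exists ((-4) * m4 + (-6) * m5 + (-8) * m6 + (-12) * m7 + (-10) * m8 + (-8) * m9 + (-6) * m10 + (-3) * m11 + (-24) * m12 + (-42) * m13 + (-48) * m14 + (-72) * m15 + (-54) * m16 + (-36) * m17 + (-18) * m18 + (-6) * ent v 13); rewrite /=; lia.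
have v11 : (2 %| ent v 11 - ent v 13 * kf 11 - ent v 19 * af 11)%Z.
  clear -hm4 hm5 hm6 hm7 hm8 hm9 hm10 hm11 hm12 hm13 hm14 hm15 hm16 hm17 hm18; apply/dvdzP; exists ((-2) * m4 + (-3) * m5 + (-4) * m6 + (-6) * m7 + (-5) * m8 + (-4) * m9 + (-3) * m10 + (-2) * m11 + (-24) * m12 + (-42) * m13 + (-48) * m14 + (-72) * m15 + (-54) * m16 + (-36) * m17 + (-18) * m18 + (-6) * ent v 13); rewrite /=; lia.
have v12 : (2 %| ent v 12 - ent v 13 * kf 12 - ent v 19 * af 12)%Z.
  clear -hm12 hm13 hm14 hm15 hm16 hm17 hm18; apply/dvdzP; exists ((-22) * m12 + (-37) * m13 + (-43) * m14 + (-64) * m15 + (-48) * m16 + (-32) * m17 + (-16) * m18 + (-6) * ent v 13); rewrite /=; lia.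
have v13 : (2 %| ent v 13 - ent v 13 * kf 13 - ent v 19 * af 13)%Z.
  clear -hm12 hm13 hm14 hm15 hm16 hm17 hm18; apply/dvdzP; exists ((-20) * m12 + (-35) * m13 + (-40) * m14 + (-60) * m15 + (-45) * m16 + (-30) * m17 + (-15) * m18 + (-6) * ent v 13); rewrite /=; lia.
have v14 : (2 %| ent v 14 - ent v 13 * kf 14 - ent v 19 * af 14)%Z.
  clear -hm12 hm13 hm14 hm15 hm16 hm17 hm18; apply/dvdzP; exists ((-19) * m12 + (-32) * m13 + (-38) * m14 + (-56) * m15 + (-42) * m16 + (-28) * m17 + (-14) * m18 + (-6) * ent v 13); rewrite /=; lia.
have v15 : (2 %| ent v 15 - ent v 13 * kf 15 - ent v 19 * af 15)%Z.
  clear -hm12 hm13 hm14 hm15 hm16 hm17 hm18; apply/dvdzP; exists ((-16) * m12 + (-27) * m13 + (-32) * m14 + (-48) * m15 + (-36) * m16 + (-24) * m17 + (-12) * m18 + (-6) * ent v 13); rewrite /=; lia.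
have v16 : (2 %| ent v 16 - ent v 13 * kf 16 - ent v 19 * af 16)%Z.
  clear -hm12 hm13 hm14 hm15 hm16 hm17 hm18; apply/dvdzP; exists ((-17) * m12 + (-29) * m13 + (-34) * m14 + (-51) * m15 + (-39) * m16 + (-26) * m17 + (-13) * m18 + (-6) * ent v 13); rewrite /=; lia.
have v17 : (2 %| ent v 17 - ent v 13 * kf 17 - ent v 19 * af 17)%Z.
  clear -hm12 hm13 hm14 hm15 hm16 hm17 hm18; apply/dvdzP; exists ((-18) * m12 + (-31) * m13 + (-36) * m14 + (-54) * m15 + (-41) * m16 + (-28) * m17 + (-14) * m18 + (-6) * ent v 13); rewrite /=; lia.
have v18 : (2 %| ent v 18 - ent v 13 * kf 18 - ent v 19 * af 18)%Z.
  clear -hm12 hm13 hm14 hm15 hm16 hm17 hm18; apply/dvdzP; exists ((-19) * m12 + (-33) * m13 + (-38) * m14 + (-57) * m15 + (-43) * m16 + (-29) * m17 + (-15) * m18 + (-6) * ent v 13); rewrite /=; lia.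
have v19 : (2 %| ent v 19 - ent v 13 * kf 19 - ent v 19 * af 19)%Z.
  clear -hm12 hm13 hm14 hm15 hm16 hm17 hm18; apply/dvdzP; exists ((-24) * m12 + (-42) * m13 + (-48) * m14 + (-72) * m15 + (-54) * m16 + (-36) * m17 + (-18) * m18 + (-6) * ent v 13); rewrite /=; lia.
move=> i hi.
do 20 (case: i hi => [|i] hi; [done|]).
by [].
Qed.

Lemma mod8 (v : 'rV[int]_20) (y : nat -> int) (e d : int) :
  (forall i, (i < 20)%N -> ent v i = 2 * y i + e * kf i + d * af i) ->
  bilR v v = 8 * (qfF y - e * y 18%N - d * y 19%N) - 6 * e ^+ 2 - 2 * d ^+ 2.
Proof. move=> H; rewrite /bilR !H //= /qfF; ring. Qed.

Lemma diff8 (v1 v2 : 'rV[int]_20) (z : nat -> int) :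
  (forall i, (i < 20)%N -> ent v1 i = ent v2 i + 2 * z i) ->
  bilR v1 v1 - 2 * bilR v1 v2 + bilR v2 v2 = 8 * qfF z.
Proof. move=> H; rewrite /bilR !H // /qfF; ring. Qed.

Lemma par (M e d : int) : -2 = 8 * M - 6 * e ^+ 2 - 2 * d ^+ 2 -> (2 %| e)%Z /\ (2 %| d - 1)%Z.
Proof.
move=> h.
have [p hp] : exists p, e = 2 * p \/ e = 2 * p + 1 by exists (e %/ 2)%Z; lia.
have [q hq] : exists q, d = 2 * q \/ d = 2 * q + 1 by exists (d %/ 2)%Z; lia.
case: hp => he; case: hq => hd; rewrite he hd in h *; split; try lia.
Qed.

Lemma combZ (a1 a2 y1 y2 e1 e2 d1 d2 A B k f : int) : A * 2 = e1 - e2 -> B * 2 = d1 - d2 ->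
  a1 = 2 * y1 + e1 * k + d1 * f -> a2 = 2 * y2 + e2 * k + d2 * f ->
  a1 = a2 + 2 * (y1 - y2 + A * k + B * f).
Proof.
move=> hA hB -> ->.
have -> : e1 = e2 + A * 2 by lia.
have -> : d1 = d2 + B * 2 by lia.
ring.
Qed.

Lemma divK2 (m : int) : (2 %| m)%Z -> m = 2 * (m %/ 2)%Z.
Proof. by move=> h; rewrite mulrC divzK. Qed.

Lemma lattice (v1 v2 : 'rV[int]_20) :
  (forall w, (2 %| bil v1 w)%Z) -> (forall w, (2 %| bil v2 w)%Z) ->
  bil v1 v1 = -2 -> bil v2 v2 = -2 -> bil v1 v2 = 0 -> False.
Proof.
move=> H1 H2 h11 h22 h12.
have D1 := decomp H1; have D2 := decomp H2.
pose y1 i := ((ent v1 i - ent v1 13 * kf i - ent v1 19 * af i) %/ 2)%Z.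
pose y2 i := ((ent v2 i - ent v2 13 * kf i - ent v2 19 * af i) %/ 2)%Z.
have E1 : forall i, (i < 20)%N -> ent v1 i = 2 * y1 i + ent v1 13 * kf i + ent v1 19 * af i.
  move=> i hi; have := divK2 (D1 i hi); rewrite -/(y1 i); lia.
have E2 : forall i, (i < 20)%N -> ent v2 i = 2 * y2 i + ent v2 13 * kf i + ent v2 19 * af i.
  move=> i hi; have := divK2 (D2 i hi); rewrite -/(y2 i); lia.
have M1 := mod8 E1; have M2 := mod8 E2.
rewrite -bilE h11 in M1; rewrite -bilE h22 in M2.
have [pe1 pd1] := par M1; have [pe2 pd2] := par M2.
have ed : (2 %| ent v1 13 - ent v2 13)%Z by lia.
have dd : (2 %| ent v1 19 - ent v2 19)%Z by lia.
have Z : forall i, (i < 20)%N -> ent v1 i = ent v2 i +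
   2 * (y1 i - y2 i + ((ent v1 13 - ent v2 13) %/ 2)%Z * kf i + ((ent v1 19 - ent v2 19) %/ 2)%Z * af i).
  move=> i hi; apply: combZ; [exact: divzK|exact: divzK|exact: E1|exact: E2].
have := diff8 Z; rewrite -!bilE h11 h22 h12; lia.
Qed.



Lemma bil_g (g : 'M[int]_20) (a b : 'rV[int]_20) : in_Gamma g -> bil (a *m g) (b *m g) = bil a b.
Proof.
move=> [_ hg]; rewrite /bil.
have -> : a *m Gram8 *m b^T = a *m (g *m Gram8 *m g^T) *m b^T by rewrite hg.
by rewrite trmx_mul !mulmxA.
Qed.

Lemma orbit_props (v : 'rV[int]_20) : in_unigonal_orbit v ->
  bil v v = -2 /\ forall w, (2 %| bil v w)%Z.
Proof.
move=> [u [g [[_ [huu [_ [hdiv _]]]] [hg ->]]]].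
split; first by rewrite bil_g.
move=> w; have hu := proj1 hg.
by rewrite -(mulmxKV hu w) bil_g.
Qed.

Lemma toC_lin (R : realType) (a b : 'rV[int]_20) (s : int) :
  toC R (a + s *: b) = toC R a + (s%:~R : R[i]) *: toC R b.
Proof. by apply/rowP => j; rewrite !mxE /intC intrD intrM. Qed.

Lemma part2 (R : realType) : ~ (exists z : 'rV[R[i]]_20, in_union_Hu2 z).
Proof.
move=> [z [v1 [v2 [o1 [o2 [hind [[hz h1] [_ h2]]]]]]]].
have [h11 d1] := orbit_props o1.
have [h22 d2] := orbit_props o2.
have [m hm] : exists m, bil v1 v2 = m * 2 by apply/dvdzP.
have key : forall s : int, s != 0 -> bilR (v1 + s *: v2) (v1 + s *: v2) < 0.
  move=> s hs; apply: (negC hz).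
    rewrite toC_lin bilC_R bilR_sym bilR_linl !(bilR_sym _ z) -!bilC_R h1 h2; ring.
  apply/eqP => h0; move: (hind 1 s); rewrite scale1r => /(_ h0) [h10 _].
  by move: h10.
have k1 := key (-1) isT.
have k2 := key 1 isT.
rewrite -{1 2}[v1]scale1r bilR_comb -!bilE h11 h22 hm in k1.
rewrite -{1 2}[v1]scale1r bilR_comb -!bilE h11 h22 hm in k2.
have m0 : m = 0 by lia.
apply: (lattice d1 d2 h11 h22); rewrite hm m0; ring.
Qed.



Definition vh : 'rV[int]_20 := \row_(i < 20) kf i.
Lemma ent_vh k : (k < 20)%N -> ent vh k = kf k.
Proof. by move=> hk; rewrite /ent mxE inordK. Qed.
Definition x0 : 'rV[int]_20 := ej 0 + ej 1.
Definition y0 : 'rV[int]_20 := ej 2 + ej 3.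

Lemma c_vhvh : bilR vh vh = -6.
Proof. by rewrite /bilR !ent_vh. Qed.
Lemma c_vhw w : bilR vh w = -2 * ent w 18.
Proof. rewrite /bilR !ent_vh //=; ring. Qed.
Lemma c_vuvu : bilR (ej 19) (ej 19) = -2.
Proof. by rewrite /bilR !ent_ej. Qed.
Lemma c_vuw w : bilR (ej 19) w = -2 * ent w 19.
Proof. rewrite /bilR !ent_ej //=; ring. Qed.
Lemma c_xx : bilR x0 x0 = 2.
Proof. by rewrite /bilR /x0 !entD !ent_ej. Qed.
Lemma c_yy : bilR y0 y0 = 2.
Proof. by rewrite /bilR /y0 !entD !ent_ej. Qed.
Lemma c_xy : bilR x0 y0 = 0.
Proof. by rewrite /bilR /x0 /y0 !entD !ent_ej. Qed.
Lemma c_xvh : bilR x0 vh = 0.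
Proof. by rewrite /bilR /x0 !entD !ent_ej // !ent_vh. Qed.
Lemma c_yvh : bilR y0 vh = 0.
Proof. by rewrite /bilR /y0 !entD !ent_ej // !ent_vh. Qed.
Lemma c_xvu : bilR x0 (ej 19) = 0.
Proof. by rewrite /bilR /x0 !entD !ent_ej. Qed.
Lemma c_yvu : bilR y0 (ej 19) = 0.
Proof. by rewrite /bilR /y0 !entD !ent_ej. Qed.

Definition Zc (R : realType) (a b : 'rV[int]_20) : 'rV[R[i]]_20 :=
  1 *: map_mx (real_complex R) (map_mx (fun k : int => k%:~R : R) a)
  + 'i *: map_mx (real_complex R) (map_mx (fun k : int => k%:~R : R) b).

Lemma Zc_conj (R : realType) (a b : 'rV[int]_20) :
  map_mx conjc (Zc R a b) =
  1 *: map_mx (real_complex R) (map_mx (fun k : int => k%:~R : R) a)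
  + (- 'i) *: map_mx (real_complex R) (map_mx (fun k : int => k%:~R : R) b).
Proof.
apply/rowP => j; rewrite !mxE /=.
by simpc.
Qed.

Lemma Zc_toC (R : realType) (a b v : 'rV[int]_20) :
  bilR a v = 0 -> bilR b v = 0 -> bilC (Zc R a b) (toC R v) = 0.
Proof.
move=> ha hb.
have ht : toC R v = map_mx (real_complex R) (map_mx (fun k : int => k%:~R : R) v).
  by apply/rowP => j; rewrite !mxE /intC rmorph_int.
rewrite bilC_R ht /Zc bilR_lin2 !bilR_map ?bilR_intr ha hb.
by rewrite !rmorph0 !mulr0 addr0.
Qed.

Lemma Zc_D (R : realType) (a b : 'rV[int]_20) :
  bilR a a = bilR b b -> bilR a b = 0 -> 0 < bilR a a -> in_D (Zc R a b).
Proof.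
move=> hab h0 hpos.
have hii : (Complex 0 1) * (Complex 0 1) = -1 :> R[i] by rewrite -expr2 sqr_i.
split.
  rewrite bilC_R /Zc bilR_comb !bilR_map ?bilR_intr hab h0 hii.
  rewrite rmorph0 /=; ring.
rewrite bilC_R Zc_conj /Zc bilR_comb !bilR_map ?bilR_intr hab h0 !mulrN hii.
rewrite rmorph0 mulr0 addr0 opprK !mul1r -mulr2n -rmorphMn.
rewrite -(rmorph0 (real_complex R)) ltcR pmulrn_rgt0 //.
by rewrite ltr0z -hab.
Qed.

Lemma unit_of (k m : int) : k * m = 1 -> k = 1 \/ k = -1.
Proof.
move=> h; have : k \is a GRing.unit by apply/unitrPr; exists m.
rewrite qualifE /=.
by case/orP => /eqP ->; [left|right].
Qed.

Lemma hyp_vh : hyperelliptic vh.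
Proof.
split; last split.
- split.
    apply/eqP => h; have := ent_vh (k := 12) isT; rewrite h ent0 => /eqP.
    by [].
  move=> k w hw.
  have e12 := ent_vh (k := 12) isT; have e13 := ent_vh (k := 13) isT.
  rewrite hw entZ /= in e12; rewrite hw entZ /= in e13.
  apply: (unit_of (m := ent w 13 - ent w 12)).
  by rewrite mulrBr e13 e12.
- by rewrite bilE c_vhvh.
- split=> //; split.
    by move=> w; rewrite bilE c_vhw; apply/dvdzP; exists (- ent w 18); ring.
  exists ((-1) *: ej 18); rewrite bilE c_vhw entZ ent_ej //.
Qed.

Lemma uni_vu : unigonal (ej 19).
Proof.
split; last split.
- split.
    apply/eqP => h; have := ent_ej 19 (k := 19) isT; rewrite h ent0 => /eqP.
    by [].
  move=> k w hw.
  have e19 := ent_ej 19 (k := 19) isT.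
  rewrite hw entZ /= in e19.
  apply: (unit_of (m := ent w 19)).
  by rewrite e19.
- by rewrite bilE c_vuvu.
- split=> //; split.
    by move=> w; rewrite bilE c_vuw; apply/dvdzP; exists (- ent w 19); ring.
  exists ((-1) *: ej 19); rewrite bilE c_vuw entZ ent_ej //.
Qed.

Lemma part1 (R : realType) : exists z z' : 'rV[R[i]]_20,
      in_union_hyperelliptic z /\ in_union_unigonal z' /\ sameF z z'.
Proof.
have hD : in_D (Zc R x0 y0) by apply: Zc_D; rewrite ?c_xx ?c_yy ?c_xy.
exists (Zc R x0 y0), (Zc R x0 y0); split; last split.
- exists vh; split; first exact: hyp_vh.
  by split=> //; apply: Zc_toC; rewrite ?c_xvh ?c_yvh.
- exists (ej 19); split; first exact: uni_vu.
  by split=> //; apply: Zc_toC; rewrite ?c_xvu ?c_yvu.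
- exists 1%:M; split.
    by split; [exact: unitmx1|rewrite mul1mx trmx1 mulmx1].
  exists 1; split; first exact: oner_neq0.
  have -> : map_mx (@intC R) (1%:M : 'M[int]_20) = 1%:M.
    by apply/matrixP => i j; rewrite !mxE /intC; case: (i == j).
  by rewrite mulmx1 scale1r.
Qed.

Theorem mainTheorem13 (R : realType) :
  (exists z z' : 'rV[R[i]]_20,
      in_union_hyperelliptic z /\ in_union_unigonal z' /\ sameF z z')
  /\ ~ (exists z : 'rV[R[i]]_20, in_union_Hu2 z).
Proof. split; [exact: part1|exact: part2]. Qed.
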